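(* Let $s=0$, $\lambda\in\mathbb{C}$ and $k\in\mathbb{Z}\setminus\{0\}$. Every odd superderivation of $\mathfrak{L}^0_\lambda$ of degree $k$ is inner; more precisely, it equals $\mathrm{ad}(aG_k+bH_k)$ for some $a,b\in\mathbb{C}$.
   Context: For $s\in\{0,\tfrac12\}$ and $\lambda\in\mathbb{C}$, $\mathfrak{L}^s_\lambda$ is the complex Lie superalgebra with basis $\{L_m,I_m,G_p,H_p : m\in\mathbb{Z},\ p\in s+\mathbb{Z}\}$, even part spanned by the $L_m,I_m$, odd part spanned by the $G_p,H_p$, and brackets $[L_m,L_n]=(m-n)L_{m+n}$, $[L_m,I_n]=(m-n)I_{m+n}$, $[L_m,H_p]=(\tfrac m2-p)H_{m+p}$, $[L_m,G_p]=(\tfrac m2-p)G_{m+p}+\lambda(m+1)H_{m+p}$, $[I_m,G_p]=(m-2p)H_{m+p}$, $[G_p,G_q]=I_{p+q}$, plus those given by super-antisymmetry $[y,x]=-(-1)^{|x||y|}[x,y]$; all other brackets of basis elements are zero. $\mathfrak{L}_r$ is spanned by basis elements of index $r$. A superderivation of parity $a$ is a linear map $D$ shifting parity by $a$ with $D([x,y])=[D(x),y]+(-1)^{a|x|}[x,D(y)]$ for homogeneous $x,y$; it has degree $r$ if $D(\mathfrak{L}_q)\subset\mathfrak{L}_{q+r}$. $\mathrm{ad}\,x(y)=[x,y]$. *)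

(* Defs.v *)
From HB Require Import structures.
From mathcomp Require Import all_boot all_order all_algebra.
Set Implicit Arguments. Unset Strict Implicit. Unset Printing Implicit Defensive.
Import Order.TTheory GRing.Theory Num.Theory.
Local Open Scope ring_scope.

(* The Lie superalgebra L^0_lambda is Z-graded: L_r = span(L_r, I_r, G_r, H_r)
   (s = 0, so p ranges over Z).  An element of the homogeneous component L_r
   is encoded by its coordinate row vector in 'rV[C]_4 w.r.t. the ordered
   basis (L_r, I_r, G_r, H_r), i.e. index 0 = L, 1 = I, 2 = G, 3 = H. *)

Definition kL : 'I_4 := inord 0.
Definition kI : 'I_4 := inord 1.
Definition kG : 'I_4 := inord 2.
Definition kH : 'I_4 := inord 3.

(* parity of the basis kind: true = odd (G, H) *)
Definition par (i : 'I_4) : bool := (2 <= i)%N.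

Definition cvec {C : pzRingType} (c0 c1 c2 c3 : C) : 'rV[C]_4 :=
  \row_(j < 4) nth 0 [:: c0; c1; c2; c3] j.

(* bb lam m n i j = [e_{i,m}, e_{j,n}] as coordinates in L_{m+n}. *)
Definition bb (C : fieldType) (lam : C) (m n : int) (i j : 'I_4) : 'rV[C]_4 :=
  let M : C := m%:~R in let N : C := n%:~R in
  match nat_of_ord i, nat_of_ord j with
  | 0, 0 => cvec (M - N) 0 0 0
  | 0, 1 => cvec 0 (M - N) 0 0
  | 1, 0 => cvec 0 (M - N) 0 0                               (* [I_m,L_n] = -[L_n,I_m] *)
  | 0, 2 => cvec 0 0 (M / 2 - N) (lam * (M + 1))
  | 2, 0 => cvec 0 0 (- (N / 2 - M)) (- (lam * (N + 1)))     (* [G_m,L_n] = -[L_n,G_m] *)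
  | 0, 3 => cvec 0 0 0 (M / 2 - N)
  | 3, 0 => cvec 0 0 0 (- (N / 2 - M))                       (* [H_m,L_n] = -[L_n,H_m] *)
  | 1, 2 => cvec 0 0 0 (M - 2 * N)
  | 2, 1 => cvec 0 0 0 (- (N - 2 * M))                       (* [G_m,I_n] = -[I_n,G_m] *)
  | 2, 2 => cvec 0 1 0 0
  | _, _ => 0
  end.

Definition ev {C : fieldType} (j : 'I_4) : 'rV[C]_4 := delta_mx 0 j.

Definition br (C : fieldType) (lam : C) (m n : int) (u v : 'rV[C]_4) : 'rV[C]_4 :=
  \sum_(i < 4) \sum_(j < 4) (u 0 i * v 0 j) *: bb lam m n i j.

(* A linear map D of degree k is determined by the images of the basis
   vectors: D i q = D(e_{i,q}) in L_{q+k} (coordinates). Its value on a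
   vector u of L_q is applyD D q u. *)
Definition applyD (C : fieldType) (D : 'I_4 -> int -> 'rV[C]_4) (q : int)
    (u : 'rV[C]_4) : 'rV[C]_4 :=
  \sum_(i < 4) u 0 i *: D i q.

(* D (given on basis, of degree k) is an odd superderivation:
   - it shifts parity (images of even basis vectors are odd and vice versa);
   - D[x,y] = [Dx,y] + (-1)^{|x|}[x,Dy] on homogeneous basis elements
     (which suffices by bilinearity). *)
Definition is_odd_superder (C : fieldType) (lam : C) (k : int)
    (D : 'I_4 -> int -> 'rV[C]_4) : Prop :=
  (forall (i : 'I_4) (q : int) (j : 'I_4), par j = par i -> D i q 0 j = 0) /\
  (forall (i j : 'I_4) (m n : int),
      applyD D (m + n) (bb lam m n i j)
      = br lam (m + k) n (D i m) (ev j)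
        + (-1) ^+ par i *: br lam m (n + k) (ev i) (D j n)).

Definition adGH (C : fieldType) (lam : C) (k : int) (a b : C)
    (i : 'I_4) (m : int) : 'rV[C]_4 :=
  a *: bb lam k m kG i + b *: bb lam k m kH i.

(* Main.v *)
Require Import Defs.
From HB Require Import structures.
From mathcomp Require Import all_boot all_order all_algebra.
From mathcomp Require Import ring.
Import Order.TTheory GRing.Theory Num.Theory.
Local Open Scope ring_scope.

Lemma eq_from (C : fieldType) (L R X Y c : C) : L = R -> X - Y = c * (L - R) -> X = Y.
Proof. by move=> -> /eqP; rewrite subrr mulr0 subr_eq0 => /eqP. Qed.

Section S.
Variables (C : numClosedFieldType) (lam : C) (k : int) (hk : k != 0)
    (D : 'I_4 -> int -> 'rV[C]_4).
Hypothesis Hpar : forall (i : 'I_4) (q : int) (j : 'I_4), par j = par i -> D i q 0 j = 0.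
Hypothesis Hder : forall (i j : 'I_4) (m n : int),
      applyD D (m + n) (bb lam m n i j)
      = br lam (m + k) n (D i m) (ev j)
        + (-1) ^+ par i *: br lam m (n + k) (ev i) (D j n).

Lemma parE : (par kL = false) * (par kI = false) * (par kG = true) * (par kH = true).
Proof. by rewrite /par !inordK. Qed.

Lemma ordE : (kL = ord0) * (kI = lift ord0 ord0) * (kG = lift ord0 (lift ord0 ord0))
  * (kH = lift ord0 (lift ord0 (lift ord0 ord0))).
Proof. by do !split; apply/val_inj; rewrite /= inordK. Qed.

Lemma ordsum (F : 'I_4 -> 'rV[C]_4) : \sum_(i < 4) F i = F kL + F kI + F kG + F kH.
Proof. by rewrite !big_ord_recl big_ord0 addr0 !addrA !ordE. Qed.

Lemma applyDE q u : applyD D q u = u 0 kL *: D kL q + u 0 kI *: D kI q + u 0 kG *: D kG q + u 0 kH *: D kH q.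
Proof. by rewrite /applyD ordsum. Qed.

Lemma evE (i j : 'I_4) : ev i 0 j = (i == j)%:R :> C.
Proof. by rewrite !mxE /= eq_sym. Qed.

Lemma valE : (nat_of_ord kL = 0%N) * (nat_of_ord kI = 1%N) * (nat_of_ord kG = 2%N) * (nat_of_ord kH = 3%N).
Proof. by rewrite !inordK. Qed.

Lemma brE1 m n u j : br lam m n u (ev j) = \sum_(i<4) u 0 i *: bb lam m n i j.
Proof.
apply eq_bigr => i _; rewrite (bigD1 j) //= big1 ?addr0; first by rewrite evE eqxx mulr1.
by move=> j' hj'; rewrite evE eq_sym (negbTE hj') mulr0 scale0r.
Qed.
Lemma brE2 m n i v : br lam m n (ev i) v = \sum_(j<4) v 0 j *: bb lam m n i j.
Proof.
rewrite /br (bigD1 i) //= [X in _ + X]big1 ?addr0; last first.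
  by move=> i' hi'; apply: big1 => j _; rewrite evE eq_sym (negbTE hi') mul0r scale0r.
by apply eq_bigr => j _; rewrite evE eqxx mul1r.
Qed.

Lemma Z q : (D kL q 0 kL = 0) * (D kL q 0 kI = 0) * (D kI q 0 kL = 0) * (D kI q 0 kI = 0)
  * (D kG q 0 kG = 0) * (D kG q 0 kH = 0) * (D kH q 0 kG = 0) * (D kH q 0 kH = 0).
Proof. by do !split; apply: Hpar; rewrite ?parE. Qed.

Ltac simp := rewrite ?add0r ?applyDE ?brE1 ?brE2 ?ordsum /adGH /bb ?valE /= ?mxE ?valE /= ?parE ?Z /= ?intrD ?mulr0z ?expr0 ?expr1.

Lemma main : exists a b : C, forall (i : 'I_4) (m : int), D i m = adGH lam k a b i m.
Proof.
have kn0 : (k%:~R : C) != 0 by rewrite intr_eq0.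
exists ((D kL 0 0 kG : C) / k%:~R), (((D kL 0 0 kH : C) + (D kL 0 0 kG : C) / k%:~R * lam) / k%:~R) => i m.
have EE := fun i j => congr1 (fun v : 'rV[C]_4 => v 0 j) (Hder kL i 0 m).
have hA : D kL m 0 kG = - ((D kL 0 0 kG : C) / k%:~R) * (m%:~R / 2 - k%:~R).
  have := EE kL kG; simp => E.
  apply: (@eq_from _ _ _ _ _ (k%:~R)^-1 E); by field.
have hB : D kL m 0 kH = - ((D kL 0 0 kG : C) / k%:~R * lam * (m%:~R + 1)
     + ((D kL 0 0 kH : C) + (D kL 0 0 kG : C) / k%:~R * lam) / k%:~R * (m%:~R / 2 - k%:~R)).
  have := EE kL kH; simp; rewrite hA => E.
  apply: (@eq_from _ _ _ _ _ (k%:~R)^-1 E); by field.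
have hGa : D kI m 0 kG = 0.
  have := EE kI kG; simp => E.
  apply: (@eq_from _ _ _ _ _ (k%:~R)^-1 E); by field.
have hDe : D kI m 0 kH = - ((D kL 0 0 kG : C) / k%:~R) * (m%:~R - 2 * k%:~R).
  have := EE kI kH; simp; rewrite hGa => E.
  apply: (@eq_from _ _ _ _ _ (k%:~R)^-1 E); by field.
have hP : D kH m 0 kL = 0.
  have := EE kH kL; simp => E.
  apply: (@eq_from _ _ _ _ _ (k%:~R)^-1 E); by field.
have hQ : D kH m 0 kI = 0.
  have := EE kH kI; simp => E.
  apply: (@eq_from _ _ _ _ _ (k%:~R)^-1 E); by field.
have hE : D kG m 0 kL = 0.
  have := EE kG kL; simp; rewrite hP => E.
  apply: (@eq_from _ _ _ _ _ (k%:~R)^-1 E); by field.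
have hZ : D kG m 0 kI = (D kL 0 0 kG : C) / k%:~R.
  have := EE kG kI; simp; rewrite hQ => E.
  apply: (@eq_from _ _ _ _ _ (k%:~R)^-1 E); by field.
have o4 : forall j : 'I_4, [\/ j = kL, j = kI, j = kG | j = kH].
  move=> j; case: j => [[|[|[|[|j]]]] hj] //.
  - by apply: Or41; apply/val_inj; rewrite /= valE.
  - by apply: Or42; apply/val_inj; rewrite /= valE.
  - by apply: Or43; apply/val_inj; rewrite /= valE.
  - by apply: Or44; apply/val_inj; rewrite /= valE.
apply/rowP => j.
case: (o4 i) => ->; case: (o4 j) => ->; simp;
  rewrite ?hA ?hB ?hGa ?hDe ?hE ?hZ ?hP ?hQ; by field.
Qed.
End S.

Theorem lemma2p4 (C : numClosedFieldType) (lam : C) (k : int) (hk : k != 0)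
    (D : 'I_4 -> int -> 'rV[C]_4) :
  is_odd_superder lam k D ->
  exists a b : C, forall (i : 'I_4) (m : int), D i m = adGH lam k a b i m.
Proof. by move=> [Hp Hd]; apply: main. Qed.
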